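(* Let $\bar{\mathcal{X}}=(\mathcal{G},\mathbf{U}_1,\mathbf{U}_2,\mathbf{U}_3)\in\mathcal{M}_r$ and $\eta=(\eta_{\mathcal{G}},\eta_1,\eta_2,\eta_3)\in T_{\bar{\mathcal{X}}}\mathcal{M}_r$. The linear system in skew-symmetric unknowns $\mathbf{\Omega}_i\in\mathbb{R}^{r_i\times r_i}$ ($\mathbf{\Omega}_i^\top=-\mathbf{\Omega}_i$), $i=1,2,3$, $$\mathrm{skw}(\mathbf{V}_i^\top\mathbf{V}_i\mathbf{\Omega}_i\mathbf{G}_i)+\mathrm{skw}(\mathbf{G}_i\mathbf{\Omega}_i)+\mathrm{skw}(\mathbf{W}_i^\top\mathbf{W}_i\mathbf{\Omega}_i\mathbf{G}_{\alpha_i})-\mathcal{G}_{(i)}\big(\mathbf{I}_{r_{j_i}}\otimes\mathbf{\Omega}_{k_i}+\mathbf{\Omega}_{j_i}\otimes\mathbf{I}_{r_{k_i}}\big)\mathcal{G}_{(i)}^\top=\mathrm{skw}\big(\mathbf{V}_i^\top\eta_i\mathbf{G}_i+\mathbf{W}_i^\top\eta_i\mathbf{G}_{\alpha_i}+\mathcal{G}_{(i)}(\eta_{\mathcal{G}})_{(i)}^\top\big),\quad i=1,2,3,$$ has a unique solution $(\mathbf{\Omega}_1,\mathbf{\Omega}_2,\mathbf{\Omega}_3)$, and the orthogonal projection (with respect to $\langle\cdot,\cdot\rangle_{\bar{\mathcal{X}}}$) of $\eta$ onto the horizontal space $\mathcal{H}_{\bar{\mathcal{X}}}$ is $$\Pi_{\bar{\mathcal{X}}}(\eta)=\Big(\eta_{\mathcal{G}}+\sum_{i=1}^3\mathcal{G}\times_i\mathbf{\Omega}_i,\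 \eta_1-\mathbf{U}_1\mathbf{\Omega}_1,\ \eta_2-\mathbf{U}_2\mathbf{\Omega}_2,\ \eta_3-\mathbf{U}_3\mathbf{\Omega}_3\Big).$$
   Context: Fix $1\le r_i\le n_i$, $k_i\ge r_i$, $N=n_1n_2n_3$, $\alpha_i>0$, $\mathbf{P}_i\in\mathbb{R}^{n_i\times k_i}$ with orthonormal columns. $\mathcal{X}_{(i)}$ is the mode-$i$ matricization and $\times_i$ the mode-$i$ product, with the convention $(\mathcal{G}\times_1\mathbf{A}_1\times_2\mathbf{A}_2\times_3\mathbf{A}_3)_{(i)}=\mathbf{A}_i\mathcal{G}_{(i)}(\mathbf{A}_{j_i}\otimes\mathbf{A}_{k_i})^\top$, where $j_i=\max(\{1,2,3\}\setminus\{i\})$, $k_i=\min(\{1,2,3\}\setminus\{i\})$, and $\otimes$ is the Kronecker product. Total space $\mathcal{M}_r=\{(\mathcal{G},\mathbf{U}_1,\mathbf{U}_2,\mathbf{U}_3):\mathcal{G}\in\mathbb{R}^{r_1\times r_2\times r_3},\ \mathrm{rank}\,\mathcal{G}_{(i)}=r_i,\ \mathbf{U}_i^\top\mathbf{U}_i=\mathbf{I}_{r_i}\}$, tangent space $T_{\bar{\mathcal{X}}}\mathcal{M}_r=\{(\eta_{\mathcal{G}},\eta_1,\eta_2,\eta_3):\mathbf{U}_i^\top\eta_i+\eta_i^\top\mathbf{U}_i=0\}$. Metric: $\langle\eta,\xi\rangle_{\bar{\mathcal{X}}}=\sum_i\langle\eta_i,\xi_i\mathcal{G}_{(i)}\mathcal{G}_{(i)}^\top\rangle+\langle\eta_{\mathcal{G}},\xi_{\mathcal{G}}\rangle+\sum_iN\alpha_i\langle\eta_i,(\mathbf{I}-\mathbf{P}_i\mathbf{P}_i^\top)\xi_i\rangle$.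 Vertical space $\mathcal{V}_{\bar{\mathcal{X}}}=\{(-\sum_{i=1}^3\mathcal{G}\times_i\mathbf{\Omega}_i,\mathbf{U}_1\mathbf{\Omega}_1,\mathbf{U}_2\mathbf{\Omega}_2,\mathbf{U}_3\mathbf{\Omega}_3):\mathbf{\Omega}_i^\top=-\mathbf{\Omega}_i\}$; horizontal space $\mathcal{H}_{\bar{\mathcal{X}}}$ = orthogonal complement of $\mathcal{V}_{\bar{\mathcal{X}}}$ in $T_{\bar{\mathcal{X}}}\mathcal{M}_r$ w.r.t. the metric. Notation: $\mathbf{V}_i=\mathbf{P}_i\mathbf{P}_i^\top\mathbf{U}_i$, $\mathbf{W}_i=\mathbf{U}_i-\mathbf{V}_i$, $\mathbf{G}_i=\mathcal{G}_{(i)}\mathcal{G}_{(i)}^\top$, $\mathbf{G}_{\alpha_i}=N\alpha_i\mathbf{I}+\mathcal{G}_{(i)}\mathcal{G}_{(i)}^\top$, $\mathrm{skw}(\mathbf{A})=(\mathbf{A}-\mathbf{A}^\top)/2$. *)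

(* Defs.v *)
From HB Require Import structures.
From mathcomp Require Import all_boot all_order all_algebra.
Set Implicit Arguments. Unset Strict Implicit. Unset Printing Implicit Defensive.
Import Order.TTheory GRing.Theory Num.Theory.
Local Open Scope ring_scope.

Definition tensor (R : Type) (a b c : nat) := {ffun 'I_a * 'I_b * 'I_c -> R}.

(* Decoding of a Kronecker index k : 'I_(m*n) into a pair (i, j)
   (the encoding used by mathcomp's mxvec_index). *)
Definition kidx (m n : nat) (k : 'I_(m * n)) : 'I_m * 'I_n :=
  enum_val (cast_ord (esym (mxvec_cast m n)) k).

Definition kron (R : pzRingType) (m1 n1 m2 n2 : nat)
  (A : 'M[R]_(m1, n1)) (B : 'M[R]_(m2, n2)) : 'M[R]_(m1 * m2, n1 * n2) :=
  \matrix_(p, q) (A (kidx p).1 (kidx q).1 * B (kidx p).2 (kidx q).2).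

Section Tensors.
Variable R : pzRingType.
Variables a b c : nat.

(* Mode-i matricizations, with the convention
   (G x1 A1 x2 A2 x3 A3)_(i) = A_i G_(i) (A_{j_i} (x) A_{k_i})^T,
   j_i = max({1,2,3}\{i}), k_i = min({1,2,3}\{i}):
   columns of G_(1) are indexed by (i3,i2), of G_(2) by (i3,i1),
   of G_(3) by (i2,i1). *)
Definition unf1 (G : tensor R a b c) : 'M[R]_(a, c * b) :=
  \matrix_(i, q) G (i, (kidx q).2, (kidx q).1).
Definition unf2 (G : tensor R a b c) : 'M[R]_(b, c * a) :=
  \matrix_(j, q) G ((kidx q).2, j, (kidx q).1).
Definition unf3 (G : tensor R a b c) : 'M[R]_(c, b * a) :=
  \matrix_(k, q) G ((kidx q).2, (kidx q).1, k).

Definition mprod1 (G : tensor R a b c) (A : 'M[R]_a) : tensor R a b c :=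
  [ffun t => let: (i, j, k) := t in \sum_(l < a) A i l * G (l, j, k)].
Definition mprod2 (G : tensor R a b c) (A : 'M[R]_b) : tensor R a b c :=
  [ffun t => let: (i, j, k) := t in \sum_(l < b) A j l * G (i, l, k)].
Definition mprod3 (G : tensor R a b c) (A : 'M[R]_c) : tensor R a b c :=
  [ffun t => let: (i, j, k) := t in \sum_(l < c) A k l * G (i, j, l)].

Definition frob (m n : nat) (A B : 'M[R]_(m, n)) : R := \tr (A^T *m B).
Definition tfrob (X Y : tensor R a b c) : R := \sum_t X t * Y t.
End Tensors.

Definition skewsym (R : pzRingType) (n : nat) (A : 'M[R]_n) : Prop := A^T = - A.

Definition skw (R : fieldType) (n : nat) (A : 'M[R]_n) : 'M[R]_n :=
  (2%:R)^-1 *: (A - A^T).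

Record quad (R : Type) (n1 n2 n3 r1 r2 r3 : nat) := Quad {
  qG : tensor R r1 r2 r3;
  q1 : 'M[R]_(n1, r1);
  q2 : 'M[R]_(n2, r2);
  q3 : 'M[R]_(n3, r3) }.

Section Manifold.
Variable R : realFieldType.
Variables n1 n2 n3 r1 r2 r3 k1 k2 k3 : nat.
Local Notation quad := (quad R n1 n2 n3 r1 r2 r3).

Definition qsub (x y : quad) : quad :=
  Quad (qG x - qG y) (q1 x - q1 y) (q2 x - q2 y) (q3 x - q3 y).

Definition in_Mr (X : quad) : Prop :=
  [/\ \rank (unf1 (qG X)) = r1, \rank (unf2 (qG X)) = r2
    & \rank (unf3 (qG X)) = r3] /\
  [/\ (q1 X)^T *m q1 X = 1%:M, (q2 X)^T *m q2 X = 1%:M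
    & (q3 X)^T *m q3 X = 1%:M].

Definition tangent (X eta : quad) : Prop :=
  [/\ (q1 X)^T *m q1 eta + (q1 eta)^T *m q1 X = 0,
      (q2 X)^T *m q2 eta + (q2 eta)^T *m q2 X = 0
    & (q3 X)^T *m q3 eta + (q3 eta)^T *m q3 X = 0].

Variables (P1 : 'M[R]_(n1, k1)) (P2 : 'M[R]_(n2, k2)) (P3 : 'M[R]_(n3, k3)).
Variables (alpha1 alpha2 alpha3 : R).

Definition NN : R := (n1 * n2 * n3)%:R.

Definition metric (X eta xi : quad) : R :=
  let G := qG X in
  frob (q1 eta) (q1 xi *m (unf1 G *m (unf1 G)^T))
  + frob (q2 eta) (q2 xi *m (unf2 G *m (unf2 G)^T))
  + frob (q3 eta) (q3 xi *m (unf3 G *m (unf3 G)^T))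
  + tfrob (qG eta) (qG xi)
  + NN * alpha1 * frob (q1 eta) ((1%:M - P1 *m P1^T) *m q1 xi)
  + NN * alpha2 * frob (q2 eta) ((1%:M - P2 *m P2^T) *m q2 xi)
  + NN * alpha3 * frob (q3 eta) ((1%:M - P3 *m P3^T) *m q3 xi).

Definition vertical (X v : quad) : Prop :=
  exists (O1 : 'M[R]_r1) (O2 : 'M[R]_r2) (O3 : 'M[R]_r3),
    [/\ skewsym O1, skewsym O2, skewsym O3 &
    v = Quad (- (mprod1 (qG X) O1 + mprod2 (qG X) O2 + mprod3 (qG X) O3))
             (q1 X *m O1) (q2 X *m O2) (q3 X *m O3)].

Definition horizontal (X h : quad) : Prop :=
  tangent X h /\ forall v, vertical X v -> metric X h v = 0.

Definition is_horiz_proj (X eta h : quad) : Prop :=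
  horizontal X h /\ forall xi, horizontal X xi -> metric X (qsub eta h) xi = 0.
End Manifold.

(* The i-th equation of the linear system, written for a generic mode:
   Gi = G_(i), U = U_i, P = P_i, Na = N alpha_i, Om = Omega_i,
   K = I_{r_{j_i}} (x) Omega_{k_i} + Omega_{j_i} (x) I_{r_{k_i}},
   eta = eta_i, EG = (eta_G)_(i). *)
Definition mode_eq (R : realFieldType) (n r k m : nat)
  (Gi : 'M[R]_(r, m)) (U : 'M[R]_(n, r)) (P : 'M[R]_(n, k)) (Na : R)
  (Om : 'M[R]_r) (K : 'M[R]_m) (eta : 'M[R]_(n, r)) (EG : 'M[R]_(r, m)) : Prop :=
  let V := P *m P^T *m U in
  let W := U - V in
  let Gs := Gi *m Gi^T in
  let Ga := Na%:M + Gs in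
  skw (V^T *m V *m Om *m Gs) + skw (Gs *m Om) + skw (W^T *m W *m Om *m Ga)
    - Gi *m K *m Gi^T
  = skw (V^T *m eta *m Gs + W^T *m eta *m Ga + Gi *m EG^T).

Definition horiz_system (R : realFieldType) (n1 n2 n3 r1 r2 r3 k1 k2 k3 : nat)
  (P1 : 'M[R]_(n1, k1)) (P2 : 'M[R]_(n2, k2)) (P3 : 'M[R]_(n3, k3))
  (alpha1 alpha2 alpha3 : R) (X eta : quad R n1 n2 n3 r1 r2 r3)
  (O1 : 'M[R]_r1) (O2 : 'M[R]_r2) (O3 : 'M[R]_r3) : Prop :=
  let N := NN R n1 n2 n3 in
  let G := qG X in
  [/\ mode_eq (unf1 G) (q1 X) P1 (N * alpha1) O1
        (kron (1%:M : 'M[R]_r3) O2 + kron O3 (1%:M : 'M[R]_r2))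
        (q1 eta) (unf1 (qG eta)),
      mode_eq (unf2 G) (q2 X) P2 (N * alpha2) O2
        (kron (1%:M : 'M[R]_r3) O1 + kron O3 (1%:M : 'M[R]_r1))
        (q2 eta) (unf2 (qG eta))
    & mode_eq (unf3 G) (q3 X) P3 (N * alpha3) O3
        (kron (1%:M : 'M[R]_r2) O1 + kron O2 (1%:M : 'M[R]_r1))
        (q3 eta) (unf3 (qG eta))].

(* Main.v *)
Require Import Defs.
From HB Require Import structures.
From mathcomp Require Import all_boot all_order all_algebra.
From mathcomp Require Import ring lra.
Import Order.TTheory GRing.Theory Num.Theory.
Local Open Scope ring_scope.

Module Aux.
Set Implicit Arguments. Unset Strict Implicit. Unset Printing Implicit Defensive.

Lemma kidx_bij m n : bijective (@kidx m n).
Proof.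
exists (fun p => cast_ord (mxvec_cast m n) (enum_rank p)).
  by move=> q; rewrite /kidx enum_valK; apply: val_inj.
by move=> p; rewrite /kidx (_ : cast_ord _ _ = enum_rank p) ?enum_rankK //; apply: val_inj.
Qed.


Section Basic.
Variable R : realFieldType.

Lemma frobD m n (A B C : 'M[R]_(m, n)) : frob (A + B) C = frob A C + frob B C.
Proof. by rewrite /frob raddfD /= mulmxDl mxtraceD. Qed.
Lemma frobN m n (A C : 'M[R]_(m, n)) : frob (- A) C = - frob A C.
Proof. by rewrite /frob raddfN /= mulNmx raddfN. Qed.
Lemma frobB m n (A B C : 'M[R]_(m, n)) : frob (A - B) C = frob A C - frob B C.
Proof. by rewrite frobD frobN. Qed.
Lemma frobZ m n a (A C : 'M[R]_(m, n)) : frob (a *: A) C = a * frob A C.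
Proof. by rewrite /frob linearZ /= -scalemxAl mxtraceZ. Qed.
Lemma frob0 m n (C : 'M[R]_(m, n)) : frob 0 C = 0.
Proof. by rewrite /frob raddf0 mul0mx mxtrace0. Qed.
Lemma frobC m n (A B : 'M[R]_(m, n)) : frob A B = frob B A.
Proof. by rewrite /frob -mxtrace_tr trmx_mul trmxK. Qed.
Lemma frob_mull m n p (A : 'M[R]_(m, p)) (B : 'M[R]_(m, n)) (C : 'M[R]_(n, p)) :
  frob A (B *m C) = frob (B^T *m A) C.
Proof. by rewrite /frob trmx_mul trmxK mulmxA. Qed.
Lemma frob_mulr m n p (A : 'M[R]_(m, p)) (B : 'M[R]_(m, n)) (C : 'M[R]_(n, p)) :
  frob A (B *m C) = frob (A *m C^T) B.
Proof. by rewrite /frob trmx_mul trmxK mulmxA mxtrace_mulC mulmxA. Qed.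
Lemma frob_tr n (A B : 'M[R]_n) : B^T = - B -> frob A^T B = - frob A B.
Proof.
move=> hB; rewrite /frob trmxK mxtrace_mulC -mxtrace_tr trmx_mul hB mulmxN raddfN /=.
by rewrite mxtrace_mulC.
Qed.
Lemma frob_sum m n (A B : 'M[R]_(m, n)) : frob A B = \sum_i \sum_j A j i * B j i.
Proof. by rewrite /frob /mxtrace; apply: eq_bigr => i _; rewrite mxE; apply: eq_bigr => j _; rewrite mxE. Qed.
Lemma frob_ge0 m n (A : 'M[R]_(m, n)) : 0 <= frob A A.
Proof. by rewrite frob_sum sumr_ge0 // => i _; rewrite sumr_ge0 // => j _; rewrite -expr2 sqr_ge0. Qed.
Lemma frob_eq0 m n (A : 'M[R]_(m, n)) : frob A A = 0 -> A = 0.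
Proof.
rewrite frob_sum => /eqP; rewrite psumr_eq0 => [/allP h|i _]; last first.
  by rewrite sumr_ge0 // => j _; rewrite -expr2 sqr_ge0.
apply/matrixP => j i; rewrite mxE.
have /h : i \in index_enum 'I_n by rewrite mem_index_enum.
rewrite /= psumr_eq0 => [/allP h2|k _]; last by rewrite -expr2 sqr_ge0.
have /h2 : j \in index_enum 'I_m by rewrite mem_index_enum.
by rewrite /= mulf_eq0 orbb => /eqP.
Qed.
Lemma sum_kidx m n (F : 'I_m -> 'I_n -> R) :
  \sum_(q < m * n) F (kidx q).1 (kidx q).2 = \sum_x \sum_y F x y.
Proof.
rewrite pair_big /= (reindex (@kidx m n)) //.
by case: (kidx_bij m n) => g h1 h2; exists g.
Qed.

Lemma skw_tr n (A : 'M[R]_n) : (skw A)^T = - skw A.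
Proof. by rewrite /skw linearZ /= raddfB /= trmxK -scalerN opprB. Qed.
Lemma skwD n (A B : 'M[R]_n) : skw (A + B) = skw A + skw B.
Proof. by rewrite /skw [(A + B)^T]linearD /= -scalerDr opprD addrACA. Qed.
Lemma skwN n (A : 'M[R]_n) : skw (- A) = - skw A.
Proof. by rewrite /skw raddfN /= -scalerN opprB opprK addrC. Qed.
Lemma skwB n (A B : 'M[R]_n) : skw (A - B) = skw A - skw B.
Proof. by rewrite skwD skwN. Qed.
Lemma skwZ n a (A : 'M[R]_n) : skw (a *: A) = a *: skw A.
Proof. by rewrite /skw linearZ /= -scalerBr !scalerA mulrC. Qed.
Lemma skwT n (A : 'M[R]_n) : skw A^T = - skw A.
Proof. by rewrite /skw trmxK -scalerN opprB. Qed.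
Lemma skw_skew n (A : 'M[R]_n) : A^T = - A -> skw A = A.
Proof.
move=> h; rewrite /skw h opprK -[X in 2^-1 *: (X + _)]scale1r -[X in 2^-1 *: (_ + X)]scale1r.
by rewrite -scalerDl scalerA mulVf ?scale1r // pnatr_eq0.
Qed.
Lemma frob_skw n (A B : 'M[R]_n) : B^T = - B -> frob (skw A) B = frob A B.
Proof.
move=> h; rewrite /skw frobZ frobB frob_tr //.
by rewrite opprK -mulr2n -(mulr_natl (frob A B)) mulrA mulVf ?mul1r // pnatr_eq0.
Qed.

Lemma kron_tr m1 n1 m2 n2 (A : 'M[R]_(m1, n1)) (B : 'M[R]_(m2, n2)) :
  (kron A B)^T = kron A^T B^T.
Proof. by apply/matrixP => i j; rewrite !mxE. Qed.
Lemma kronlin1 m1 n1 m2 n2 a (A : 'M[R]_(m1, n1)) (B C : 'M[R]_(m2, n2)) :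
  kron A (a *: B + C) = a *: kron A B + kron A C.
Proof. by apply/matrixP => i j; rewrite !mxE mulrDr mulrCA. Qed.
Lemma kronlin2 m1 n1 m2 n2 a (A C : 'M[R]_(m1, n1)) (B : 'M[R]_(m2, n2)) :
  kron (a *: A + C) B = a *: kron A B + kron C B.
Proof. by apply/matrixP => i j; rewrite !mxE mulrDl mulrA. Qed.
Lemma kronN1 m1 n1 m2 n2 (A : 'M[R]_(m1, n1)) (B : 'M[R]_(m2, n2)) :
  kron A (- B) = - kron A B.
Proof. by apply/matrixP => i j; rewrite !mxE mulrN. Qed.
Lemma kronN2 m1 n1 m2 n2 (A : 'M[R]_(m1, n1)) (B : 'M[R]_(m2, n2)) :
  kron (- A) B = - kron A B.
Proof. by apply/matrixP => i j; rewrite !mxE mulNr. Qed.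

Lemma sum_delta n (j : 'I_n) (F : 'I_n -> R) : \sum_x F x * (1%:M : 'M[R]_n) j x = F j.
Proof.
rewrite (bigD1 j) //= big1 ?addr0 => [|x /negbTE hx]; first by rewrite mxE eqxx mulr1.
by rewrite mxE eq_sym hx mulr0.
Qed.
End Basic.

Section Surj.
Variables (F : fieldType) (vT : vectType F) (f : vT -> vT) (lf : linear f).
HB.instance Definition _ := GRing.isLinear.Build F vT vT *:%R f lf.
Lemma ker_surj : (forall x, f x = 0 -> x = 0) -> forall b, exists x, f x = b.
Proof.
move=> fker b.
have finj : injective f.
  move=> x y e; apply/eqP; rewrite -subr_eq0; apply/eqP/fker.
  by rewrite raddfB /= e subrr.
pose g := linfun f.
have gE : g =1 f by apply: lfunE.
have k0 : lker g == 0%VS by apply/lker0P => x y; rewrite !gE; apply: finj.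
have dk := limg_ker_dim g fullv.
move/eqP: k0 => k0; rewrite k0 capv0 dimv0 add0n in dk.
have imf : limg g = fullv.
  by apply/eqP; rewrite eqEdim subvf dk leqnn.
exists ((g^-1)%VF b); rewrite -gE limg_lfunVK //; by rewrite imf memvf.
Qed.
End Surj.

Section Tens.
Variable R : realFieldType.
Variables a b c : nat.
Implicit Types Y Z G : tensor R a b c.

Lemma sum3 (F : 'I_a * 'I_b * 'I_c -> R) :
  \sum_t F t = \sum_i \sum_j \sum_k F (i, j, k).
Proof.
rewrite pair_bigA /= pair_bigA /=.
by apply: eq_bigr => -[[i j] k].
Qed.

Lemma unf1D Y Z : unf1 (Y + Z) = unf1 Y + unf1 Z.
Proof. by apply/matrixP => i j; rewrite !mxE ffunE. Qed.
Lemma unf2D Y Z : unf2 (Y + Z) = unf2 Y + unf2 Z.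
Proof. by apply/matrixP => i j; rewrite !mxE ffunE. Qed.
Lemma unf3D Y Z : unf3 (Y + Z) = unf3 Y + unf3 Z.
Proof. by apply/matrixP => i j; rewrite !mxE ffunE. Qed.

Lemma tfrob1 Y Z : tfrob Y Z = frob (unf1 Y) (unf1 Z).
Proof.
rewrite /tfrob frob_sum sum3.
rewrite (eq_bigr (fun q => \sum_j Y (j, (kidx q).2, (kidx q).1) * Z (j, (kidx q).2, (kidx q).1))); last first.
  by move=> q _; apply: eq_bigr => j _; rewrite !mxE.
rewrite (sum_kidx (fun x y => \sum_j Y (j, y, x) * Z (j, y, x))).
under eq_bigr => i _ do rewrite exchange_big.
rewrite exchange_big /=; apply: eq_bigr => k _.
by rewrite exchange_big.
Qed.

Lemma tfrob2 Y Z : tfrob Y Z = frob (unf2 Y) (unf2 Z).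
Proof.
rewrite /tfrob frob_sum sum3.
rewrite (eq_bigr (fun q => \sum_j Y ((kidx q).2, j, (kidx q).1) * Z ((kidx q).2, j, (kidx q).1))); last first.
  by move=> q _; apply: eq_bigr => j _; rewrite !mxE.
rewrite (sum_kidx (fun x y => \sum_j Y (y, j, x) * Z (y, j, x))).
under eq_bigr => i _ do rewrite exchange_big.
by rewrite exchange_big /=.
Qed.

Lemma tfrob3 Y Z : tfrob Y Z = frob (unf3 Y) (unf3 Z).
Proof.
rewrite /tfrob frob_sum sum3.
rewrite (eq_bigr (fun q => \sum_j Y ((kidx q).2, (kidx q).1, j) * Z ((kidx q).2, (kidx q).1, j))); last first.
  by move=> q _; apply: eq_bigr => j _; rewrite !mxE.
rewrite (sum_kidx (fun x y => \sum_j Y (y, x, j) * Z (y, x, j))).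
by rewrite exchange_big /=.
Qed.

Lemma unf1_m1 G A : unf1 (mprod1 G A) = A *m unf1 G.
Proof. by apply/matrixP => i q; rewrite !mxE ffunE /=; apply: eq_bigr => l _; rewrite mxE. Qed.
Lemma unf2_m2 G A : unf2 (mprod2 G A) = A *m unf2 G.
Proof. by apply/matrixP => i q; rewrite !mxE ffunE /=; apply: eq_bigr => l _; rewrite mxE. Qed.
Lemma unf3_m3 G A : unf3 (mprod3 G A) = A *m unf3 G.
Proof. by apply/matrixP => i q; rewrite !mxE ffunE /=; apply: eq_bigr => l _; rewrite mxE. Qed.

Lemma unf1_m2 G A : unf1 (mprod2 G A) = unf1 G *m (kron 1%:M A)^T.
Proof.
apply/matrixP => i q; rewrite !mxE ffunE /=.
rewrite (eq_bigr (fun q' => G (i, (kidx q').2, (kidx q').1) * ((1%:M : 'M_c) (kidx q).1 (kidx q').1 * A (kidx q).2 (kidx q').2))); last first.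
  by move=> q' _; rewrite !mxE.
rewrite (sum_kidx (fun x y => G (i, y, x) * ((1%:M : 'M_c) (kidx q).1 x * A (kidx q).2 y))).
rewrite exchange_big /=; apply: eq_bigr => l _.
under eq_bigr => x _ do rewrite mulrCA mulrC.
by rewrite sum_delta mulrC.
Qed.

Lemma unf1_m3 G A : unf1 (mprod3 G A) = unf1 G *m (kron A (1%:M : 'M_b))^T.
Proof.
apply/matrixP => i q; rewrite !mxE ffunE /=.
rewrite (eq_bigr (fun q' => G (i, (kidx q').2, (kidx q').1) * (A (kidx q).1 (kidx q').1 * (1%:M : 'M_b) (kidx q).2 (kidx q').2))); last by move=> q' _; rewrite !mxE.
rewrite (sum_kidx (fun x y => G (i, y, x) * (A (kidx q).1 x * (1%:M : 'M_b) (kidx q).2 y))).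
apply: eq_bigr => l _.
under eq_bigr => x _ do rewrite mulrA.
by rewrite sum_delta mulrC.
Qed.

Lemma unf2_m1 G A : unf2 (mprod1 G A) = unf2 G *m (kron (1%:M : 'M_c) A)^T.
Proof.
apply/matrixP => i q; rewrite !mxE ffunE /=.
rewrite (eq_bigr (fun q' => G ((kidx q').2, i, (kidx q').1) * ((1%:M : 'M_c) (kidx q).1 (kidx q').1 * A (kidx q).2 (kidx q').2))); last by move=> q' _; rewrite !mxE.
rewrite (sum_kidx (fun x y => G (y, i, x) * ((1%:M : 'M_c) (kidx q).1 x * A (kidx q).2 y))).
rewrite exchange_big /=; apply: eq_bigr => l _.
under eq_bigr => x _ do rewrite mulrCA mulrC.
by rewrite sum_delta mulrC.
Qed.

Lemma unf2_m3 G A : unf2 (mprod3 G A) = unf2 G *m (kron A (1%:M : 'M_a))^T.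
Proof.
apply/matrixP => i q; rewrite !mxE ffunE /=.
rewrite (eq_bigr (fun q' => G ((kidx q').2, i, (kidx q').1) * (A (kidx q).1 (kidx q').1 * (1%:M : 'M_a) (kidx q).2 (kidx q').2))); last by move=> q' _; rewrite !mxE.
rewrite (sum_kidx (fun x y => G (y, i, x) * (A (kidx q).1 x * (1%:M : 'M_a) (kidx q).2 y))).
apply: eq_bigr => l _.
under eq_bigr => x _ do rewrite mulrA.
by rewrite sum_delta mulrC.
Qed.

Lemma unf3_m1 G A : unf3 (mprod1 G A) = unf3 G *m (kron (1%:M : 'M_b) A)^T.
Proof.
apply/matrixP => i q; rewrite !mxE ffunE /=.
rewrite (eq_bigr (fun q' => G ((kidx q').2, (kidx q').1, i) * ((1%:M : 'M_b) (kidx q).1 (kidx q').1 * A (kidx q).2 (kidx q').2))); last by move=> q' _; rewrite !mxE.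
rewrite (sum_kidx (fun x y => G (y, x, i) * ((1%:M : 'M_b) (kidx q).1 x * A (kidx q).2 y))).
rewrite exchange_big /=; apply: eq_bigr => l _.
under eq_bigr => x _ do rewrite mulrCA mulrC.
by rewrite sum_delta mulrC.
Qed.

Lemma unf3_m2 G A : unf3 (mprod2 G A) = unf3 G *m (kron A (1%:M : 'M_a))^T.
Proof.
apply/matrixP => i q; rewrite !mxE ffunE /=.
rewrite (eq_bigr (fun q' => G ((kidx q').2, (kidx q').1, i) * (A (kidx q).1 (kidx q').1 * (1%:M : 'M_a) (kidx q).2 (kidx q').2))); last by move=> q' _; rewrite !mxE.
rewrite (sum_kidx (fun x y => G (y, x, i) * (A (kidx q).1 x * (1%:M : 'M_a) (kidx q).2 y))).
apply: eq_bigr => l _.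
under eq_bigr => x _ do rewrite mulrA.
by rewrite sum_delta mulrC.
Qed.
End Tens.

Section TensB.
Variable R : realFieldType.
Variables a b c : nat.
Implicit Types Y Z G : tensor R a b c.
Lemma tfrobD Y Z W : tfrob Y (Z + W) = tfrob Y Z + tfrob Y W.
Proof. by rewrite /tfrob -big_split; apply: eq_bigr => t _; rewrite ffunE mulrDr. Qed.
Lemma tfrobN Y Z : tfrob Y (- Z) = - tfrob Y Z.
Proof. by rewrite /tfrob -sumrN; apply: eq_bigr => t _; rewrite ffunE mulrN. Qed.
Lemma tfrobC Y Z : tfrob Y Z = tfrob Z Y.
Proof. by apply: eq_bigr => t _; rewrite mulrC. Qed.
Lemma tfrob_ge0 Y : 0 <= tfrob Y Y.
Proof. by apply: sumr_ge0 => t _; rewrite -expr2 sqr_ge0. Qed.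
Lemma tfrob_m1 Y G A : tfrob Y (mprod1 G A) = frob (unf1 Y *m (unf1 G)^T) A.
Proof. by rewrite tfrob1 unf1_m1 frob_mulr. Qed.
Lemma tfrob_m2 Y G A : tfrob Y (mprod2 G A) = frob (unf2 Y *m (unf2 G)^T) A.
Proof. by rewrite tfrob2 unf2_m2 frob_mulr. Qed.
Lemma tfrob_m3 Y G A : tfrob Y (mprod3 G A) = frob (unf3 Y *m (unf3 G)^T) A.
Proof. by rewrite tfrob3 unf3_m3 frob_mulr. Qed.
End TensB.

Section Mode.
Variable R : realFieldType.

Definition modeL (n r k m : nat)
  (Gi : 'M[R]_(r, m)) (U : 'M[R]_(n, r)) (P : 'M[R]_(n, k)) (Na : R)
  (Om : 'M[R]_r) (K : 'M[R]_m) : 'M[R]_r :=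
  skw ((P *m P^T *m U)^T *m (P *m P^T *m U) *m Om *m (Gi *m Gi^T))
  + skw ((Gi *m Gi^T) *m Om)
  + skw ((U - P *m P^T *m U)^T *m (U - P *m P^T *m U) *m Om *m (Na%:M + Gi *m Gi^T))
  - Gi *m K *m Gi^T.
Definition modeR (n r k m : nat)
  (Gi : 'M[R]_(r, m)) (U : 'M[R]_(n, r)) (P : 'M[R]_(n, k)) (Na : R)
  (eta : 'M[R]_(n, r)) (EG : 'M[R]_(r, m)) : 'M[R]_r :=
  skw ((P *m P^T *m U)^T *m eta *m (Gi *m Gi^T)
   + (U - P *m P^T *m U)^T *m eta *m (Na%:M + Gi *m Gi^T) + Gi *m EG^T).

Lemma mode_eqE n r k m Gi U P Na Om K eta EG :
  @mode_eq R n r k m Gi U P Na Om K eta EG <-> modeL Gi U P Na Om K = modeR Gi U P Na eta EG.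
Proof. by []. Qed.

Lemma mode_metric n r k m (Gi : 'M[R]_(r, m)) (U : 'M[R]_(n, r)) (P : 'M[R]_(n, k))
  (Na : R) (Om Th : 'M[R]_r) (K : 'M[R]_m) (eta : 'M[R]_(n, r)) (EG : 'M[R]_(r, m)) :
  U^T *m U = 1%:M -> P^T *m P = 1%:M -> Om^T = - Om -> Th^T = - Th -> K^T = - K ->
  frob (eta - U *m Om) (U *m Th *m (Gi *m Gi^T))
  + Na * frob (eta - U *m Om) ((1%:M - P *m P^T) *m (U *m Th))
  - frob ((EG + Om *m Gi + Gi *m K^T) *m Gi^T) Th
  = - frob (modeL Gi U P Na Om K - modeR Gi U P Na eta EG) Th.
Proof.
move=> hU hP hO hT hK.
set Gs := Gi *m Gi^T.
set Q := 1%:M - P *m P^T.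
have GsT : Gs^T = Gs by rewrite /Gs trmx_mul trmxK.
have QT : Q^T = Q by rewrite /Q linearB /= trmx1 trmx_mul trmxK.
have QQ : Q *m Q = Q.
  by rewrite /Q mulmxBl mul1mx mulmxBr mulmx1 !mulmxA -(mulmxA P) hP mulmx1 subrr subr0.
have hV : P *m P^T *m U = U - Q *m U by rewrite /Q mulmxBl mul1mx opprB addrC subrK.
clearbody Q.
have hW : U - P *m P^T *m U = Q *m U by rewrite hV opprB addrC subrK.
have hVT : (P *m P^T *m U)^T = U^T - U^T *m Q by rewrite hV linearB /= trmx_mul QT.
have hWT : (U - P *m P^T *m U)^T = U^T *m Q by rewrite hW trmx_mul QT.
have hVV : (P *m P^T *m U)^T *m (P *m P^T *m U) = 1%:M - U^T *m Q *m U.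
  rewrite hVT hV mulmxBl !mulmxBr hU -!mulmxA (mulmxA Q) QQ.
  by rewrite subrr subr0.
have hWW : (U - P *m P^T *m U)^T *m (U - P *m P^T *m U) = U^T *m Q *m U.
  by rewrite hWT hW -!mulmxA (mulmxA Q) QQ.
have fGO : frob (Gs *m Om) Th = frob (Om *m Gs) Th.
  by rewrite -[Gs *m Om]trmxK frob_tr // trmx_mul GsT hO mulNmx frobN opprK.
have fL : frob (Gi *m K *m Gi^T) Th = - frob (Gi *m K^T *m Gi^T) Th.
  by rewrite hK mulmxN mulNmx frobN opprK.
have fE : frob (Gi *m EG^T) Th = - frob (EG *m Gi^T) Th.
  by rewrite -frob_tr // trmx_mul trmxK.
rewrite [frob (eta - U *m Om) (U *m Th *m Gs)]frob_mulr GsT frob_mull.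
rewrite [frob (eta - U *m Om) (Q *m _)]frob_mull QT frob_mull.
rewrite /modeL /modeR -/Gs hVV hWW hVT hWT.
rewrite !frobB !frobD !frob_skw // ?frobD fGO fL fE.
rewrite !mulmxBl !mulmxBr !mulmxDr !mul_mx_scalar !mul1mx !mulmxDl.
rewrite !frobB !frobD !frobZ.
rewrite -!mulmxA !(mulmxA U^T U) hU !mul1mx.
ring.
Qed.
End Mode.

Section Assembly.
Variable R : realFieldType.
Variables n1 n2 n3 r1 r2 r3 k1 k2 k3 : nat.
Variables (P1 : 'M[R]_(n1, k1)) (P2 : 'M[R]_(n2, k2)) (P3 : 'M[R]_(n3, k3)).
Variables (alpha1 alpha2 alpha3 : R).
Local Notation quad := (quad R n1 n2 n3 r1 r2 r3).
Local Notation N := (NN R n1 n2 n3).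
Local Notation metric := (metric P1 P2 P3 alpha1 alpha2 alpha3).

Definition K1 (O2 : 'M[R]_r2) (O3 : 'M[R]_r3) :=
  kron (1%:M : 'M[R]_r3) O2 + kron O3 (1%:M : 'M[R]_r2).
Definition K2 (O1 : 'M[R]_r1) (O3 : 'M[R]_r3) :=
  kron (1%:M : 'M[R]_r3) O1 + kron O3 (1%:M : 'M[R]_r1).
Definition K3 (O1 : 'M[R]_r1) (O2 : 'M[R]_r2) :=
  kron (1%:M : 'M[R]_r2) O1 + kron O2 (1%:M : 'M[R]_r1).

Definition hq (X eta : quad) O1 O2 O3 : quad :=
  Quad (qG eta + (mprod1 (qG X) O1 + mprod2 (qG X) O2 + mprod3 (qG X) O3))
       (q1 eta - q1 X *m O1) (q2 eta - q2 X *m O2) (q3 eta - q3 X *m O3).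
Definition vq (X : quad) O1 O2 O3 : quad :=
  Quad (- (mprod1 (qG X) O1 + mprod2 (qG X) O2 + mprod3 (qG X) O3))
       (q1 X *m O1) (q2 X *m O2) (q3 X *m O3).

Definition D1 (X eta : quad) O1 O2 O3 :=
  modeL (unf1 (qG X)) (q1 X) P1 (N * alpha1) O1 (K1 O2 O3)
  - modeR (unf1 (qG X)) (q1 X) P1 (N * alpha1) (q1 eta) (unf1 (qG eta)).
Definition D2 (X eta : quad) O1 O2 O3 :=
  modeL (unf2 (qG X)) (q2 X) P2 (N * alpha2) O2 (K2 O1 O3)
  - modeR (unf2 (qG X)) (q2 X) P2 (N * alpha2) (q2 eta) (unf2 (qG eta)).
Definition D3 (X eta : quad) O1 O2 O3 :=
  modeL (unf3 (qG X)) (q3 X) P3 (N * alpha3) O3 (K3 O1 O2)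
  - modeR (unf3 (qG X)) (q3 X) P3 (N * alpha3) (q3 eta) (unf3 (qG eta)).

Lemma kron_skew1 m p (O : 'M[R]_p) : O^T = - O -> (kron (1%:M : 'M[R]_m) O)^T = - kron (1%:M : 'M[R]_m) O.
Proof. by move=> h; rewrite kron_tr trmx1 h kronN1. Qed.
Lemma kron_skew2 m p (O : 'M[R]_p) : O^T = - O -> (kron O (1%:M : 'M[R]_m))^T = - kron O (1%:M : 'M[R]_m).
Proof. by move=> h; rewrite kron_tr trmx1 h kronN2. Qed.

Lemma skewD m (A B : 'M[R]_m) : A^T = - A -> B^T = - B -> (A + B)^T = - (A + B).
Proof. by move=> hA hB; rewrite linearD /= hA hB opprD. Qed.

Lemma metric_id (X eta : quad) O1 O2 O3 T1 T2 T3 :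
  (q1 X)^T *m q1 X = 1%:M -> (q2 X)^T *m q2 X = 1%:M -> (q3 X)^T *m q3 X = 1%:M ->
  P1^T *m P1 = 1%:M -> P2^T *m P2 = 1%:M -> P3^T *m P3 = 1%:M ->
  O1^T = - O1 -> O2^T = - O2 -> O3^T = - O3 ->
  T1^T = - T1 -> T2^T = - T2 -> T3^T = - T3 ->
  metric X (hq X eta O1 O2 O3) (vq X T1 T2 T3)
  = - (frob (D1 X eta O1 O2 O3) T1 + frob (D2 X eta O1 O2 O3) T2 + frob (D3 X eta O1 O2 O3) T3).
Proof.
move=> hU1 hU2 hU3 hP1 hP2 hP3 hO1 hO2 hO3 hT1 hT2 hT3.
have sK1 : (K1 O2 O3)^T = - K1 O2 O3 by apply: skewD; [apply: kron_skew1|apply: kron_skew2].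
have sK2 : (K2 O1 O3)^T = - K2 O1 O3 by apply: skewD; [apply: kron_skew1|apply: kron_skew2].
have sK3 : (K3 O1 O2)^T = - K3 O1 O2 by apply: skewD; [apply: kron_skew1|apply: kron_skew2].
set Y := qG eta + (mprod1 (qG X) O1 + mprod2 (qG X) O2 + mprod3 (qG X) O3).
have e1 : unf1 Y = unf1 (qG eta) + O1 *m unf1 (qG X) + unf1 (qG X) *m (K1 O2 O3)^T.
  by rewrite !unf1D unf1_m1 unf1_m2 unf1_m3 /K1 linearD /= mulmxDr !addrA.
have e2 : unf2 Y = unf2 (qG eta) + O2 *m unf2 (qG X) + unf2 (qG X) *m (K2 O1 O3)^T.
  by rewrite !unf2D unf2_m1 unf2_m2 unf2_m3 /K2 linearD /= mulmxDr -!addrA (addrCA (_ *m (kron 1%:M O1)^T)).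
have e3 : unf3 Y = unf3 (qG eta) + O3 *m unf3 (qG X) + unf3 (qG X) *m (K3 O1 O2)^T.
  by rewrite !unf3D unf3_m1 unf3_m2 unf3_m3 /K3 linearD /= mulmxDr [X in _ + X = _]addrC !addrA.
have m1 := @mode_metric R _ _ _ _ (unf1 (qG X)) (q1 X) P1 (N * alpha1) O1 T1 (K1 O2 O3) (q1 eta) (unf1 (qG eta)) hU1 hP1 hO1 hT1 sK1.
have m2 := @mode_metric R _ _ _ _ (unf2 (qG X)) (q2 X) P2 (N * alpha2) O2 T2 (K2 O1 O3) (q2 eta) (unf2 (qG eta)) hU2 hP2 hO2 hT2 sK2.
have m3 := @mode_metric R _ _ _ _ (unf3 (qG X)) (q3 X) P3 (N * alpha3) O3 T3 (K3 O1 O2) (q3 eta) (unf3 (qG eta)) hU3 hP3 hO3 hT3 sK3.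
rewrite /D1 /D2 /D3 !opprD -m1 -m2 -m3 -e1 -e2 -e3 -!tfrob_m1 -!tfrob_m2 -!tfrob_m3.
rewrite /metric /hq /vq /= -/Y tfrobN !tfrobD.
ring.
Qed.

Lemma frobGG n r m (w : 'M[R]_(n, r)) (G : 'M[R]_(r, m)) :
  frob w (w *m (G *m G^T)) = frob (w *m G) (w *m G).
Proof. by rewrite mulmxA frob_mulr trmxK. Qed.

Lemma frobQ n k r (P : 'M[R]_(n, k)) (w : 'M[R]_(n, r)) : P^T *m P = 1%:M ->
  frob w ((1%:M - P *m P^T) *m w) = frob ((1%:M - P *m P^T) *m w) ((1%:M - P *m P^T) *m w).
Proof.
move=> hP.
have QT : (1%:M - P *m P^T)^T = 1%:M - P *m P^T by rewrite linearB /= trmx1 trmx_mul trmxK.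
have QQ : (1%:M - P *m P^T) *m (1%:M - P *m P^T) = 1%:M - P *m P^T.
  by rewrite mulmxBl mul1mx mulmxBr mulmx1 !mulmxA -(mulmxA P) hP mulmx1 subrr subr0.
by rewrite -{1}QQ -{1}QT -mulmxA frob_mull trmxK.
Qed.

Lemma row_free_eq0 r m (G : 'M[R]_(r, m)) n (w : 'M[R]_(n, r)) :
  \rank G = r -> w *m G = 0 -> w = 0.
Proof.
move=> hr hw; apply: (@row_free_inj _ _ _ _ G); first by rewrite /row_free hr.
by rewrite /= hw mul0mx.
Qed.

Lemma metric_pos (X w : quad) :
  in_Mr X -> P1^T *m P1 = 1%:M -> P2^T *m P2 = 1%:M -> P3^T *m P3 = 1%:M ->
  0 < alpha1 -> 0 < alpha2 -> 0 < alpha3 ->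
  metric X w w = 0 -> [/\ q1 w = 0, q2 w = 0 & q3 w = 0].
Proof.
move=> [[hr1 hr2 hr3] _] hP1 hP2 hP3 ha1 ha2 ha3.
rewrite /metric !frobGG !frobQ //.
set t1 := frob (q1 w *m _) _; set t2 := frob (q2 w *m _) _; set t3 := frob (q3 w *m _) _.
set t4 := tfrob _ _.
set t5 := frob ((1%:M - P1 *m P1^T) *m q1 w) _.
set t6 := frob ((1%:M - P2 *m P2^T) *m q2 w) _.
set t7 := frob ((1%:M - P3 *m P3^T) *m q3 w) _.
have h1 : 0 <= t1 by apply: frob_ge0.
have h2 : 0 <= t2 by apply: frob_ge0.
have h3 : 0 <= t3 by apply: frob_ge0.
have h4 : 0 <= t4 by apply: tfrob_ge0.
have hN : 0 <= N by rewrite /NN ler0n.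
have h5 : 0 <= N * alpha1 * t5 by rewrite !mulr_ge0 ?frob_ge0 // ltW.
have h6 : 0 <= N * alpha2 * t6 by rewrite !mulr_ge0 ?frob_ge0 // ltW.
have h7 : 0 <= N * alpha3 * t7 by rewrite !mulr_ge0 ?frob_ge0 // ltW.
move: h5 h6 h7; set s5 := N * alpha1 * t5; set s6 := N * alpha2 * t6; set s7 := N * alpha3 * t7.
move=> h5 h6 h7 hs.
have z1 : t1 = 0 by lra.
have z2 : t2 = 0 by lra.
have z3 : t3 = 0 by lra.
split.
- by apply: (row_free_eq0 hr1); apply: frob_eq0.
- by apply: (row_free_eq0 hr2); apply: frob_eq0.
- by apply: (row_free_eq0 hr3); apply: frob_eq0.
Qed.

Lemma skewB m (A B : 'M[R]_m) : A^T = - A -> B^T = - B -> (A - B)^T = - (A - B).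
Proof. by move=> hA hB; rewrite linearB /= hA hB opprK opprB addrC. Qed.
Lemma modeL_skew n r k m (Gi : 'M[R]_(r, m)) (U : 'M[R]_(n, r)) (P : 'M[R]_(n, k)) Na Om K :
  K^T = - K -> (modeL Gi U P Na Om K)^T = - modeL Gi U P Na Om K.
Proof.
move=> hK; rewrite /modeL; apply: skewB; first by apply: skewD; [apply: skewD|]; apply: skw_tr.
by rewrite !trmx_mul trmxK hK mulNmx mulmxN mulmxA.
Qed.
Lemma modeR_skew n r k m (Gi : 'M[R]_(r, m)) (U : 'M[R]_(n, r)) (P : 'M[R]_(n, k)) Na eta EG :
  (modeR Gi U P Na eta EG)^T = - modeR Gi U P Na eta EG.
Proof. by rewrite /modeR skw_tr. Qed.

Lemma D1_skew (X eta : quad) O1 O2 O3 : O2^T = - O2 -> O3^T = - O3 ->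
  (D1 X eta O1 O2 O3)^T = - D1 X eta O1 O2 O3.
Proof.
move=> h2 h3; apply: skewB; last exact: modeR_skew.
by apply: modeL_skew; apply: skewD; [apply: kron_skew1|apply: kron_skew2].
Qed.
Lemma D2_skew (X eta : quad) O1 O2 O3 : O1^T = - O1 -> O3^T = - O3 ->
  (D2 X eta O1 O2 O3)^T = - D2 X eta O1 O2 O3.
Proof.
move=> h1 h3; apply: skewB; last exact: modeR_skew.
by apply: modeL_skew; apply: skewD; [apply: kron_skew1|apply: kron_skew2].
Qed.
Lemma D3_skew (X eta : quad) O1 O2 O3 : O1^T = - O1 -> O2^T = - O2 ->
  (D3 X eta O1 O2 O3)^T = - D3 X eta O1 O2 O3.
Proof.
move=> h1 h2; apply: skewB; last exact: modeR_skew.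
by apply: modeL_skew; apply: skewD; [apply: kron_skew1|apply: kron_skew2].
Qed.

Lemma frob_symS n m (A B : 'M[R]_(n, m)) (S : 'M[R]_m) : S^T = S ->
  frob A (B *m S) = frob B (A *m S).
Proof. by move=> hS; rewrite frob_mulr hS frobC. Qed.
Lemma frob_symQ n m (A B : 'M[R]_(n, m)) (S : 'M[R]_n) : S^T = S ->
  frob A (S *m B) = frob B (S *m A).
Proof. by move=> hS; rewrite frob_mull hS frobC. Qed.

Lemma metric_sym (X a b : quad) : metric X a b = metric X b a.
Proof.
have hG m p (G : 'M[R]_(m, p)) : (G *m G^T)^T = G *m G^T by rewrite trmx_mul trmxK.
have hQ m p (P : 'M[R]_(m, p)) : (1%:M - P *m P^T)^T = 1%:M - P *m P^T.
  by rewrite linearB /= trmx1 trmx_mul trmxK.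
by rewrite /metric !(frob_symS (q1 a)) ?hG // !(frob_symS (q2 a)) ?hG // !(frob_symS (q3 a)) ?hG //
  tfrobC !(frob_symQ (q1 a)) ?hQ // !(frob_symQ (q2 a)) ?hQ // !(frob_symQ (q3 a)) ?hQ.
Qed.

Lemma tangent_hq (X eta : quad) O1 O2 O3 :
  (q1 X)^T *m q1 X = 1%:M -> (q2 X)^T *m q2 X = 1%:M -> (q3 X)^T *m q3 X = 1%:M ->
  O1^T = - O1 -> O2^T = - O2 -> O3^T = - O3 -> tangent X eta ->
  tangent X (hq X eta O1 O2 O3).
Proof.
move=> hU1 hU2 hU3 h1 h2 h3 [e1 e2 e3]; rewrite /tangent /hq /=.
have gen n r (U e : 'M[R]_(n, r)) (O : 'M[R]_r) : U^T *m U = 1%:M -> O^T = - O ->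
    U^T *m e + e^T *m U = 0 -> U^T *m (e - U *m O) + (e - U *m O)^T *m U = 0.
  move=> hU hO he; rewrite mulmxBr linearB /= trmx_mul mulmxBl mulmxA hU mul1mx.
  by rewrite -mulmxA hU mulmx1 hO opprK addrACA he add0r addNr.
by split; apply: gen.
Qed.

Definition zq : quad := Quad 0 0 0 0.

Lemma unf1_0 : unf1 (0 : tensor R r1 r2 r3) = 0.
Proof. by apply/matrixP => i j; rewrite !mxE ffunE. Qed.
Lemma unf2_0 : unf2 (0 : tensor R r1 r2 r3) = 0.
Proof. by apply/matrixP => i j; rewrite !mxE ffunE. Qed.
Lemma unf3_0 : unf3 (0 : tensor R r1 r2 r3) = 0.
Proof. by apply/matrixP => i j; rewrite !mxE ffunE. Qed.

Lemma modeR0 n r k m (Gi : 'M[R]_(r, m)) (U : 'M[R]_(n, r)) (P : 'M[R]_(n, k)) Na :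
  modeR Gi U P Na 0 0 = 0.
Proof. by rewrite /modeR !mulmx0 !mul0mx trmx0 mulmx0 !addr0 /skw trmx0 subr0 scaler0. Qed.

Lemma metric_negl (X a b : quad) :
  metric X (Quad (- qG a) (- q1 a) (- q2 a) (- q3 a)) b = - metric X a b.
Proof. rewrite /metric /= !frobN [tfrob (- _) _]tfrobC tfrobN (tfrobC (qG b)); ring. Qed.

Lemma inMr_U (X : quad) : in_Mr X ->
  [/\ (q1 X)^T *m q1 X = 1%:M, (q2 X)^T *m q2 X = 1%:M & (q3 X)^T *m q3 X = 1%:M].
Proof. by case. Qed.

Lemma key0 (X : quad) O1 O2 O3 :
  in_Mr X -> P1^T *m P1 = 1%:M -> P2^T *m P2 = 1%:M -> P3^T *m P3 = 1%:M ->
  0 < alpha1 -> 0 < alpha2 -> 0 < alpha3 ->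
  O1^T = - O1 -> O2^T = - O2 -> O3^T = - O3 ->
  modeL (unf1 (qG X)) (q1 X) P1 (N * alpha1) O1 (K1 O2 O3) = 0 ->
  modeL (unf2 (qG X)) (q2 X) P2 (N * alpha2) O2 (K2 O1 O3) = 0 ->
  modeL (unf3 (qG X)) (q3 X) P3 (N * alpha3) O3 (K3 O1 O2) = 0 ->
  [/\ O1 = 0, O2 = 0 & O3 = 0].
Proof.
move=> hX hP1 hP2 hP3 ha1 ha2 ha3 h1 h2 h3 z1 z2 z3.
have [hU1 hU2 hU3] := inMr_U hX.
have := metric_id zq hU1 hU2 hU3 hP1 hP2 hP3 h1 h2 h3 h1 h2 h3.
rewrite /D1 /D2 /D3 /zq /= unf1_0 unf2_0 unf3_0 !modeR0 z1 z2 z3 !subr0 !frob0 !addr0 oppr0.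
have -> : hq X (Quad 0 0 0 0) O1 O2 O3 =
   Quad (- qG (vq X O1 O2 O3)) (- q1 (vq X O1 O2 O3)) (- q2 (vq X O1 O2 O3)) (- q3 (vq X O1 O2 O3)).
  by rewrite /hq /vq /= add0r !sub0r opprK.
rewrite metric_negl => /eqP; rewrite oppr_eq0 => /eqP hm.
have [e1 e2 e3] := metric_pos hX hP1 hP2 hP3 ha1 ha2 ha3 hm.
move: e1 e2 e3; rewrite /vq /= => e1 e2 e3.
split.
- by rewrite -[O1]mul1mx -hU1 -mulmxA e1 mulmx0.
- by rewrite -[O2]mul1mx -hU2 -mulmxA e2 mulmx0.
- by rewrite -[O3]mul1mx -hU3 -mulmxA e3 mulmx0.
Qed.

Lemma skew0 m : (0 : 'M[R]_m)^T = - 0.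
Proof. by rewrite trmx0 oppr0. Qed.

Lemma frobx0 m p (A : 'M[R]_(m, p)) : frob A 0 = 0.
Proof. by rewrite frobC frob0. Qed.

Lemma horiz_iff (X eta : quad) O1 O2 O3 :
  in_Mr X -> P1^T *m P1 = 1%:M -> P2^T *m P2 = 1%:M -> P3^T *m P3 = 1%:M ->
  O1^T = - O1 -> O2^T = - O2 -> O3^T = - O3 -> tangent X eta ->
  horizontal P1 P2 P3 alpha1 alpha2 alpha3 X (hq X eta O1 O2 O3) <->
  [/\ D1 X eta O1 O2 O3 = 0, D2 X eta O1 O2 O3 = 0 & D3 X eta O1 O2 O3 = 0].
Proof.
move=> hX hP1 hP2 hP3 h1 h2 h3 he.
have [hU1 hU2 hU3] := inMr_U hX.
have mid := metric_id eta hU1 hU2 hU3 hP1 hP2 hP3 h1 h2 h3.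
split.
- move=> [_ hv].
  have s1 := D1_skew X eta O1 h2 h3.
  have s2 := D2_skew X eta O2 h1 h3.
  have s3 := D3_skew X eta O3 h1 h2.
  have v1 := hv (vq X (D1 X eta O1 O2 O3) 0 0).
  have v2 := hv (vq X 0 (D2 X eta O1 O2 O3) 0).
  have v3 := hv (vq X 0 0 (D3 X eta O1 O2 O3)).
  rewrite mid ?skew0 // !frobx0 ?addr0 ?add0r in v1.
  rewrite mid ?skew0 // !frobx0 ?addr0 ?add0r in v2.
  rewrite mid ?skew0 // !frobx0 ?addr0 ?add0r in v3.
  split; apply: frob_eq0; apply/eqP; rewrite -oppr_eq0; apply/eqP.
  + by apply: v1; exists (D1 X eta O1 O2 O3), 0, 0; split; rewrite /skewsym ?skew0.
  + by apply: v2; exists 0, (D2 X eta O1 O2 O3), 0; split; rewrite /skewsym ?skew0.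
  + by apply: v3; exists 0, 0, (D3 X eta O1 O2 O3); split; rewrite /skewsym ?skew0.
- move=> [z1 z2 z3]; split; first exact: tangent_hq.
  move=> v [T1 [T2 [T3 [t1 t2 t3 ->]]]].
  change (metric X (hq X eta O1 O2 O3) (vq X T1 T2 T3) = 0).
  by rewrite mid // z1 z2 z3 !frob0 !addr0 oppr0.
Qed.

Lemma lin2 (V : lmodType R) a (x y u w : V) : (a *: x + y) + (a *: u + w) = a *: (x + u) + (y + w).
Proof. by rewrite scalerDr addrACA. Qed.

Lemma skw_lin n a (x y : 'M[R]_n) : skw (a *: x + y) = a *: skw x + skw y.
Proof. by rewrite skwD skwZ. Qed.

Lemma mul_lin m n p q a (A : 'M[R]_(m, n)) (x y : 'M[R]_(n, p)) (B : 'M[R]_(p, q)) :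
  A *m (a *: x + y) *m B = a *: (A *m x *m B) + A *m y *m B.
Proof. by rewrite mulmxDr mulmxDl -scalemxAr -scalemxAl. Qed.

Lemma modeL_lin n r k m (Gi : 'M[R]_(r, m)) (U : 'M[R]_(n, r)) (P : 'M[R]_(n, k)) Na a Om Om' K K' :
  modeL Gi U P Na (a *: Om + Om') (a *: K + K')
  = a *: modeL Gi U P Na Om K + modeL Gi U P Na Om' K'.
Proof.
rewrite /modeL !mul_lin mulmxDr -scalemxAr !skw_lin !lin2.
by rewrite opprD -scalerN lin2.
Qed.

Lemma K1_lin a x2 y2 x3 y3 : K1 (a *: x2 + y2) (a *: x3 + y3) = a *: K1 x2 x3 + K1 y2 y3.
Proof. by rewrite /K1 kronlin1 kronlin2 lin2. Qed.
Lemma K2_lin a x1 y1 x3 y3 : K2 (a *: x1 + y1) (a *: x3 + y3) = a *: K2 x1 x3 + K2 y1 y3.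
Proof. by rewrite /K2 kronlin1 kronlin2 lin2. Qed.
Lemma K3_lin a x1 y1 x2 y2 : K3 (a *: x1 + y1) (a *: x2 + y2) = a *: K3 x1 x2 + K3 y1 y2.
Proof. by rewrite /K3 kronlin1 kronlin2 lin2. Qed.

Lemma sym_lin n a (x y : 'M[R]_n) : (a *: x + y) + (a *: x + y)^T = a *: (x + x^T) + (y + y^T).
Proof. by rewrite linearD /= linearZ /= lin2. Qed.

Definition Fmap (X : quad) (x : 'M[R]_r1 * 'M[R]_r2 * 'M[R]_r3) : 'M[R]_r1 * 'M[R]_r2 * 'M[R]_r3 :=
  (modeL (unf1 (qG X)) (q1 X) P1 (N * alpha1) (skw x.1.1) (K1 (skw x.1.2) (skw x.2)) + (x.1.1 + x.1.1^T),
   modeL (unf2 (qG X)) (q2 X) P2 (N * alpha2) (skw x.1.2) (K2 (skw x.1.1) (skw x.2)) + (x.1.2 + x.1.2^T),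
   modeL (unf3 (qG X)) (q3 X) P3 (N * alpha3) (skw x.2) (K3 (skw x.1.1) (skw x.1.2)) + (x.2 + x.2^T)).

Lemma Fmap_lin X : linear (Fmap X).
Proof.
move=> a x y; rewrite /Fmap /=.
by rewrite !skw_lin K1_lin K2_lin K3_lin !modeL_lin !sym_lin !lin2.
Qed.

Lemma twice0 m p (B : 'M[R]_(m, p)) : B + B = 0 -> B = 0.
Proof. by move/eqP; rewrite -mulr2n -scaler_nat scaler_eq0 pnatr_eq0 /= => /eqP. Qed.

Lemma skew_sym0 m (A B : 'M[R]_m) : A^T = - A -> B^T = B -> A + B = 0 -> A = 0 /\ B = 0.
Proof.
move=> hA hB e.
have e' : - A + B = 0 by rewrite -hA -hB -linearD /= e trmx0.
have h : A + B + (- A + B) = B + B by rewrite addrACA subrr add0r.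
have hB0 : B = 0 by apply: twice0; rewrite -h e e' addr0.
by split => //; move: e; rewrite hB0 addr0.
Qed.

Lemma skw_sym_eq0 m (x : 'M[R]_m) : skw x = 0 -> x + x^T = 0 -> x = 0.
Proof.
move=> /eqP; rewrite /skw scaler_eq0 invr_eq0 pnatr_eq0 /= => /eqP h1 h2.
by apply: twice0; rewrite -[LHS]addr0 -{1}(addNr x^T) addrACA h1 add0r h2.
Qed.

Lemma sym_tr m (x : 'M[R]_m) : (x + x^T)^T = x + x^T.
Proof. by rewrite linearD /= trmxK addrC. Qed.

Lemma Fmap_ker (X : quad) x :
  in_Mr X -> P1^T *m P1 = 1%:M -> P2^T *m P2 = 1%:M -> P3^T *m P3 = 1%:M ->
  0 < alpha1 -> 0 < alpha2 -> 0 < alpha3 -> Fmap X x = 0 -> x = 0.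
Proof.
move=> hX hP1 hP2 hP3 ha1 ha2 ha3.
case: x => [[x1 x2] x3]; rewrite /Fmap /= => -[e1 e2 e3].
have s1 := skw_tr x1; have s2 := skw_tr x2; have s3 := skw_tr x3.
have [z1 w1] := skew_sym0 (modeL_skew _ _ _ _ _ (skewD (kron_skew1 _ s2) (kron_skew2 _ s3))) (sym_tr x1) e1.
have [z2 w2] := skew_sym0 (modeL_skew _ _ _ _ _ (skewD (kron_skew1 _ s1) (kron_skew2 _ s3))) (sym_tr x2) e2.
have [z3 w3] := skew_sym0 (modeL_skew _ _ _ _ _ (skewD (kron_skew1 _ s1) (kron_skew2 _ s2))) (sym_tr x3) e3.
have [o1 o2 o3] := key0 hX hP1 hP2 hP3 ha1 ha2 ha3 s1 s2 s3 z1 z2 z3.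
by rewrite (skw_sym_eq0 o1 w1) (skw_sym_eq0 o2 w2) (skw_sym_eq0 o3 w3).
Qed.

Lemma exist_sol (X eta : quad) :
  in_Mr X -> P1^T *m P1 = 1%:M -> P2^T *m P2 = 1%:M -> P3^T *m P3 = 1%:M ->
  0 < alpha1 -> 0 < alpha2 -> 0 < alpha3 ->
  exists O1 O2 O3, [/\ O1^T = - O1, O2^T = - O2 & O3^T = - O3] /\
    [/\ D1 X eta O1 O2 O3 = 0, D2 X eta O1 O2 O3 = 0 & D3 X eta O1 O2 O3 = 0].
Proof.
move=> hX hP1 hP2 hP3 ha1 ha2 ha3.
have [x hx] := ker_surj (Fmap_lin X) (fun x => Fmap_ker hX hP1 hP2 hP3 ha1 ha2 ha3 (x := x))
  (modeR (unf1 (qG X)) (q1 X) P1 (N * alpha1) (q1 eta) (unf1 (qG eta)),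
   modeR (unf2 (qG X)) (q2 X) P2 (N * alpha2) (q2 eta) (unf2 (qG eta)),
   modeR (unf3 (qG X)) (q3 X) P3 (N * alpha3) (q3 eta) (unf3 (qG eta))).
move: hx; case: x => [[x1 x2] x3]; rewrite /Fmap /= => -[e1 e2 e3].
have s1 := skw_tr x1; have s2 := skw_tr x2; have s3 := skw_tr x3.
exists (skw x1), (skw x2), (skw x3); split; first by [].
split.
- have [] := skew_sym0 (D1_skew X eta (skw x1) s2 s3) (sym_tr x1) => //.
  by rewrite /D1 addrAC e1 subrr.
- have [] := skew_sym0 (D2_skew X eta (skw x2) s1 s3) (sym_tr x2) => //.
  by rewrite /D2 addrAC e2 subrr.
- have [] := skew_sym0 (D3_skew X eta (skw x3) s1 s2) (sym_tr x3) => //.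
  by rewrite /D3 addrAC e3 subrr.
Qed.

Lemma sys_iff (X eta : quad) O1 O2 O3 :
  horiz_system P1 P2 P3 alpha1 alpha2 alpha3 X eta O1 O2 O3 <->
  [/\ D1 X eta O1 O2 O3 = 0, D2 X eta O1 O2 O3 = 0 & D3 X eta O1 O2 O3 = 0].
Proof.
split.
- move=> [h1 h2 h3]; split; apply/eqP; rewrite subr_eq0; apply/eqP.
  + exact: h1.
  + exact: h2.
  + exact: h3.
- move=> [h1 h2 h3]; split.
  + by apply/eqP; rewrite -subr_eq0; apply/eqP; exact: h1.
  + by apply/eqP; rewrite -subr_eq0; apply/eqP; exact: h2.
  + by apply/eqP; rewrite -subr_eq0; apply/eqP; exact: h3.
Qed.

Lemma diff_skew m (O O' : 'M[R]_m) : O^T = - O -> O'^T = - O' ->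
  ((-1) *: O + O')^T = - ((-1) *: O + O').
Proof. by move=> h h'; rewrite linearD /= linearZ /= h h' scalerN opprD. Qed.

Lemma main_sec (X eta : quad) :
  in_Mr X -> tangent X eta ->
  P1^T *m P1 = 1%:M -> P2^T *m P2 = 1%:M -> P3^T *m P3 = 1%:M ->
  0 < alpha1 -> 0 < alpha2 -> 0 < alpha3 ->
  exists (O1 : 'M[R]_r1) (O2 : 'M[R]_r2) (O3 : 'M[R]_r3),
    [/\ skewsym O1, skewsym O2, skewsym O3
       & horiz_system P1 P2 P3 alpha1 alpha2 alpha3 X eta O1 O2 O3] /\
        (forall (O1' : 'M[R]_r1) (O2' : 'M[R]_r2) (O3' : 'M[R]_r3),
            skewsym O1' -> skewsym O2' -> skewsym O3' ->
            horiz_system P1 P2 P3 alpha1 alpha2 alpha3 X eta O1' O2' O3' ->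
            [/\ O1' = O1, O2' = O2 & O3' = O3]) /\
        is_horiz_proj P1 P2 P3 alpha1 alpha2 alpha3 X eta
          (Quad (qG eta + (mprod1 (qG X) O1 + mprod2 (qG X) O2 + mprod3 (qG X) O3))
                (q1 eta - q1 X *m O1) (q2 eta - q2 X *m O2)
                (q3 eta - q3 X *m O3)).
Proof.
move=> hX he hP1 hP2 hP3 ha1 ha2 ha3.
have [O1 [O2 [O3 [[s1 s2 s3] [z1 z2 z3]]]]] := exist_sol eta hX hP1 hP2 hP3 ha1 ha2 ha3.
exists O1, O2, O3; split; last split.
- by split => //; apply/sys_iff.
- move=> O1' O2' O3' t1 t2 t3 /sys_iff [y1 y2 y3].
  have d1 := diff_skew s1 t1; have d2 := diff_skew s2 t2; have d3 := diff_skew s3 t3.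
  have L1 : modeL (unf1 (qG X)) (q1 X) P1 (N * alpha1) ((-1) *: O1 + O1')
              (K1 ((-1) *: O2 + O2') ((-1) *: O3 + O3')) = 0.
    rewrite K1_lin modeL_lin; move/eqP: z1; move/eqP: y1; rewrite /D1 !subr_eq0 => /eqP -> /eqP ->.
    by rewrite scaleN1r addNr.
  have L2 : modeL (unf2 (qG X)) (q2 X) P2 (N * alpha2) ((-1) *: O2 + O2')
              (K2 ((-1) *: O1 + O1') ((-1) *: O3 + O3')) = 0.
    rewrite K2_lin modeL_lin; move/eqP: z2; move/eqP: y2; rewrite /D2 !subr_eq0 => /eqP -> /eqP ->.
    by rewrite scaleN1r addNr.
  have L3 : modeL (unf3 (qG X)) (q3 X) P3 (N * alpha3) ((-1) *: O3 + O3')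
              (K3 ((-1) *: O1 + O1') ((-1) *: O2 + O2')) = 0.
    rewrite K3_lin modeL_lin; move/eqP: z3; move/eqP: y3; rewrite /D3 !subr_eq0 => /eqP -> /eqP ->.
    by rewrite scaleN1r addNr.
  have [w1 w2 w3] := key0 hX hP1 hP2 hP3 ha1 ha2 ha3 d1 d2 d3 L1 L2 L3.
  by split; apply/eqP; rewrite -subr_eq0 addrC -scaleN1r; apply/eqP.
- have hh : horizontal P1 P2 P3 alpha1 alpha2 alpha3 X (hq X eta O1 O2 O3).
    by apply/(horiz_iff hX hP1 hP2 hP3 s1 s2 s3 he).
  split; first exact: hh.
  move=> xi [_ hv].
  have -> : qsub eta (Quad (qG eta + (mprod1 (qG X) O1 + mprod2 (qG X) O2 + mprod3 (qG X) O3))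
                (q1 eta - q1 X *m O1) (q2 eta - q2 X *m O2) (q3 eta - q3 X *m O3)) = vq X O1 O2 O3.
    by rewrite /qsub /vq /= opprD addrA subrr add0r !opprB !subrKC.
  rewrite metric_sym; apply: hv.
  by exists O1, O2, O3.
Qed.


End Assembly.

End Aux.
Import Aux.

Theorem proposition7 (R : realFieldType) (n1 n2 n3 r1 r2 r3 k1 k2 k3 : nat)
  (hr1 : (1 <= r1 <= n1)%N) (hr2 : (1 <= r2 <= n2)%N) (hr3 : (1 <= r3 <= n3)%N)
  (hk1 : (r1 <= k1)%N) (hk2 : (r2 <= k2)%N) (hk3 : (r3 <= k3)%N)
  (alpha1 alpha2 alpha3 : R)
  (ha1 : 0 < alpha1) (ha2 : 0 < alpha2) (ha3 : 0 < alpha3)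
  (P1 : 'M[R]_(n1, k1)) (P2 : 'M[R]_(n2, k2)) (P3 : 'M[R]_(n3, k3))
  (hP1 : P1^T *m P1 = 1%:M) (hP2 : P2^T *m P2 = 1%:M) (hP3 : P3^T *m P3 = 1%:M)
  (X eta : quad R n1 n2 n3 r1 r2 r3)
  (hX : in_Mr X) (heta : tangent X eta) :
  exists (O1 : 'M[R]_r1) (O2 : 'M[R]_r2) (O3 : 'M[R]_r3),
    [/\ skewsym O1, skewsym O2, skewsym O3
       & horiz_system P1 P2 P3 alpha1 alpha2 alpha3 X eta O1 O2 O3] /\
        (forall (O1' : 'M[R]_r1) (O2' : 'M[R]_r2) (O3' : 'M[R]_r3),
            skewsym O1' -> skewsym O2' -> skewsym O3' ->
            horiz_system P1 P2 P3 alpha1 alpha2 alpha3 X eta O1' O2' O3' ->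
            [/\ O1' = O1, O2' = O2 & O3' = O3]) /\
        is_horiz_proj P1 P2 P3 alpha1 alpha2 alpha3 X eta
          (Quad (qG eta + (mprod1 (qG X) O1 + mprod2 (qG X) O2 + mprod3 (qG X) O3))
                (q1 eta - q1 X *m O1) (q2 eta - q2 X *m O2)
                (q3 eta - q3 X *m O3)).
Proof. by apply: main_sec. Qed.
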